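(* Let $C_1\subseteq V^n$ and $C_2\subseteq V^m$ be irreducible closed sets in the PQF-topology. Then $C_1\times C_2$ is irreducible (in the PQF-topology on $V^{n+m}$).
   Context: $F$ is an algebraically closed field of characteristic $0$, $V$ a vector space over $\mathbb{Q}$, and $\exp:(V,+)\to(F^*,\cdot)$ a surjective group homomorphism with kernel $K\cong\mathbb{Z}$. The structure $V$ is considered in the language $\{0,+,(f_q)_{q\in\mathbb{Q}},R_+,R_0\}$ where $f_q$ is scalar multiplication by $q$, $R_+(v_1,v_2,v_3)$ iff $\exp(v_1)+\exp(v_2)=\exp(v_3)$ and $R_0(v_1,v_2)$ iff $\exp(v_1)+\exp(v_2)=0$. The PQF-topology on $V^n$: the basic closed sets are the subsets of $V^n$ definable by positive (negation-free) quantifier-free first-order formulas with parameters; closed sets are intersections of basic closed sets. A nonempty closed set is irreducible if it is not the union of two proper closed subsets. *)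

(* Defs.v *)
From mathcomp Require Import all_boot all_order all_algebra.
Set Implicit Arguments. Unset Strict Implicit. Unset Printing Implicit Defensive.
Import Order.TTheory GRing.Theory Num.Theory.
Local Open Scope ring_scope.

(* Language {0, +, (f_q)_{q in Q}, R_+, R_0} with parameters from V.
   Terms in n variables x_0..x_{n-1}. *)
Inductive pterm (V : Type) (n : nat) : Type :=
| PVar : 'I_n -> pterm V n
| PPar : V -> pterm V n
| PZero : pterm V n
| PAdd : pterm V n -> pterm V n -> pterm V n
| PScale : rat -> pterm V n -> pterm V n.

(* Positive (negation-free) quantifier-free formulas. *)
Inductive pqf (V : Type) (n : nat) : Type :=
| PQTrue : pqf V n
| PQFalse : pqf V n
| PQEq : pterm V n -> pterm V n -> pqf V n
| PQRplus : pterm V n -> pterm V n -> pterm V n -> pqf V n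
| PQRzero : pterm V n -> pterm V n -> pqf V n
| PQAnd : pqf V n -> pqf V n -> pqf V n
| PQOr : pqf V n -> pqf V n -> pqf V n.

Section Semantics.
Variables (F : fieldType) (V : lmodType rat) (exp : V -> F).

Fixpoint pterm_eval n (t : pterm V n) (x : 'I_n -> V) : V :=
  match t with
  | PVar i => x i
  | PPar v => v
  | PZero => 0
  | PAdd t1 t2 => pterm_eval t1 x + pterm_eval t2 x
  | PScale q t1 => q *: pterm_eval t1 x
  end.

Fixpoint pqf_holds n (phi : pqf V n) (x : 'I_n -> V) : Prop :=
  match phi with
  | PQTrue => True
  | PQFalse => False
  | PQEq t1 t2 => pterm_eval t1 x = pterm_eval t2 x
  | PQRplus t1 t2 t3 =>
      exp (pterm_eval t1 x) + exp (pterm_eval t2 x) = exp (pterm_eval t3 x)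
  | PQRzero t1 t2 => exp (pterm_eval t1 x) + exp (pterm_eval t2 x) = 0
  | PQAnd f g => pqf_holds f x /\ pqf_holds g x
  | PQOr f g => pqf_holds f x \/ pqf_holds g x
  end.

Definition pqf_closed n (C : ('I_n -> V) -> Prop) : Prop :=
  exists S : pqf V n -> Prop,
    forall x, C x <-> (forall phi, S phi -> pqf_holds phi x).

Definition pqf_irreducible n (C : ('I_n -> V) -> Prop) : Prop :=
  (exists x, C x) /\ pqf_closed C /\
  forall A B : ('I_n -> V) -> Prop,
    pqf_closed A -> pqf_closed B ->
    (forall x, A x -> C x) -> (forall x, B x -> C x) ->
    (forall x, C x <-> (A x \/ B x)) ->
    (forall x, A x <-> C x) \/ (forall x, B x <-> C x).

End Semantics.

Definition prod_set (V : Type) n m (C1 : ('I_n -> V) -> Prop)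
    (C2 : ('I_m -> V) -> Prop) : ('I_(n + m) -> V) -> Prop :=
  fun x => C1 (fun i => x (lshift m i)) /\ C2 (fun j => x (rshift n j)).

(* Main.v *)
Require Import Defs.
From mathcomp Require Import all_boot all_order all_algebra.
From Stdlib Require Import FunctionalExtensionality PropExtensionality.
Import Order.TTheory GRing.Theory Num.Theory.
Set Implicit Arguments. Unset Strict Implicit.
Local Open Scope ring_scope.

Section Aux.
Variables (F : fieldType) (V : lmodType rat) (exp : V -> F).

Fixpoint tsubst k l (t : pterm V k) (s : 'I_k -> pterm V l) : pterm V l :=
  match t with
  | PVar i => s i
  | PPar v => PPar l v
  | PZero => PZero V l
  | PAdd a b => PAdd (tsubst a s) (tsubst b s)
  | PScale q a => PScale q (tsubst a s)
  end.

Fixpoint fsubst k l (f : pqf V k) (s : 'I_k -> pterm V l) : pqf V l :=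
  match f with
  | PQTrue => PQTrue V l
  | PQFalse => PQFalse V l
  | PQEq a b => PQEq (tsubst a s) (tsubst b s)
  | PQRplus a b c => PQRplus (tsubst a s) (tsubst b s) (tsubst c s)
  | PQRzero a b => PQRzero (tsubst a s) (tsubst b s)
  | PQAnd f g => PQAnd (fsubst f s) (fsubst g s)
  | PQOr f g => PQOr (fsubst f s) (fsubst g s)
  end.

Lemma tsubst_eval k l (t : pterm V k) (s : 'I_k -> pterm V l) y :
  pterm_eval (tsubst t s) y = pterm_eval t (fun i => pterm_eval (s i) y).
Proof. by elim: t => //= [a -> b ->|q a ->]. Qed.

Lemma fsubst_holds k l (f : pqf V k) (s : 'I_k -> pterm V l) y :
  pqf_holds exp (fsubst f s) y <-> pqf_holds exp f (fun i => pterm_eval (s i) y).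
Proof.
elim: f => /=.
- by [].
- by [].
- by move=> a b; rewrite !tsubst_eval.
- by move=> a b c; rewrite !tsubst_eval.
- by move=> a b; rewrite !tsubst_eval.
- move=> f IHf g IHg; move: IHf IHg; tauto.
- move=> f IHf g IHg; move: IHf IHg; tauto.
Qed.

Lemma closed_pullback k l (A : ('I_k -> V) -> Prop) (s : 'I_k -> pterm V l) :
  pqf_closed exp A ->
  pqf_closed exp (fun y => A (fun i => pterm_eval (s i) y)).
Proof.
move=> [S HS].
exists (fun psi => exists phi, S phi /\ psi = fsubst phi s) => y.
split.
- by move=> /HS H psi [phi [Sphi ->]]; apply/fsubst_holds; apply: H.
- by move=> H; apply/HS => phi Sphi; apply/fsubst_holds; apply: H; exists phi.
Qed.

Lemma closed_inter k (A B : ('I_k -> V) -> Prop) :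
  pqf_closed exp A -> pqf_closed exp B -> pqf_closed exp (fun x => A x /\ B x).
Proof.
move=> [S HS] [T HT]; exists (fun psi => S psi \/ T psi) => x.
split.
- by move=> [/HS H1 /HT H2] phi [/H1|/H2].
- by move=> H; split; [apply/HS|apply/HT] => phi P; apply: H; [left|right].
Qed.

Lemma closed_biginter k I (A : I -> ('I_k -> V) -> Prop) :
  (forall i, pqf_closed exp (A i)) -> pqf_closed exp (fun x => forall i, A i x).
Proof.
move=> H.
have [S HS] : exists S : I -> pqf V k -> Prop, forall i x,
    A i x <-> (forall phi, S i phi -> pqf_holds exp phi x).
  have := fun i => H i.
  move=> H'; exists (fun i phi => exists S, (forall x, A i x <-> (forall phi, S phi -> pqf_holds exp phi x)) /\ S phi).
  move=> i x; split.
  - by move=> Ax phi [S [HS Sphi]]; move: phi Sphi; apply/HS.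
  - move=> Hx; have [S HS] := H i; apply/HS => phi Sphi; apply: Hx; by exists S.
exists (fun phi => exists i, S i phi) => x; split.
- by move=> Hx phi [i Sphi]; move: phi Sphi; apply/HS.
- by move=> Hx i; apply/HS => phi Sphi; apply: Hx; exists i.
Qed.

End Aux.

Definition join (V : Type) n m (x : 'I_n -> V) (y : 'I_m -> V) : 'I_(n + m) -> V :=
  fun i => match split i with inl a => x a | inr b => y b end.

Lemma join_l (V : Type) n m (x : 'I_n -> V) (y : 'I_m -> V) :
  (fun i => join x y (lshift m i)) = x.
Proof.
apply: functional_extensionality => i; rewrite /join.
by have := unsplitK (inl _ i : 'I_n + 'I_m) => /= ->.
Qed.

Lemma join_r (V : Type) n m (x : 'I_n -> V) (y : 'I_m -> V) :
  (fun i => join x y (rshift n i)) = y.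
Proof.
apply: functional_extensionality => i; rewrite /join.
by have := unsplitK (inr _ i : 'I_n + 'I_m) => /= ->.
Qed.

Lemma join_lr (V : Type) n m (z : 'I_(n + m) -> V) :
  join (fun i => z (lshift m i)) (fun j => z (rshift n j)) = z.
Proof.
apply: functional_extensionality => i; rewrite /join.
by rewrite -[in RHS](splitK i); case: (split i).
Qed.

Theorem lemma5p17
  (F : closedFieldType) (charF0 : [pchar F] =i pred0)
  (V : lmodType rat) (exp : V -> F)
  (exp_hom : forall u v : V, exp (u + v) = exp u * exp v)
  (exp_nz : forall v : V, exp v != 0)
  (exp_surj : forall y : F, y != 0 -> exists v : V, exp v = y)
  (exp_ker : exists k : V, k != 0 /\
     forall v : V, exp v = 1 <-> exists z : int, v = k *~ z)
  (n m : nat) (C1 : ('I_n -> V) -> Prop) (C2 : ('I_m -> V) -> Prop) :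
  pqf_irreducible exp C1 -> pqf_irreducible exp C2 ->
  pqf_irreducible exp (prod_set C1 C2).
Proof.
move=> [[x0 Cx0] [cl1 irr1]] [[y0 Cy0] [cl2 irr2]].
have slice_y : forall (A : ('I_(n + m) -> V) -> Prop) x, pqf_closed exp A ->
    pqf_closed exp (fun y => A (join x y)).
  move=> A x clA.
  have := closed_pullback (fun i => match split i with
             inl a => PPar m (x a) | inr b => PVar V b end) clA.
  congr (pqf_closed _ _); apply: functional_extensionality => y.
  congr A; apply: functional_extensionality => i; rewrite /join.
  by case: (split i).
have slice_x : forall (A : ('I_(n + m) -> V) -> Prop) y, pqf_closed exp A ->
    pqf_closed exp (fun x => A (join x y)).
  move=> A y clA.
  have := closed_pullback (fun i => match split i with
             inl a => PVar V a | inr b => PPar n (y b) end) clA.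
  congr (pqf_closed _ _); apply: functional_extensionality => x.
  congr A; apply: functional_extensionality => i; rewrite /join.
  by case: (split i).
have prodE : forall x y, prod_set C1 C2 (join x y) <-> C1 x /\ C2 y.
  by move=> x y; rewrite /prod_set join_l join_r.
split; first by exists (join x0 y0); apply/prodE.
split.
  have h1 := closed_pullback (fun i : 'I_n => PVar V (lshift m i)) cl1.
  have h2 := closed_pullback (fun j : 'I_m => PVar V (rshift n j)) cl2.
  exact: closed_inter h1 h2.
move=> A B clA clB AC BC CAB.
pose A1 x := C1 x /\ forall y, C2 y -> A (join x y).
pose B1 x := C1 x /\ forall y, C2 y -> B (join x y).
have clS : forall D : ('I_(n + m) -> V) -> Prop, pqf_closed exp D ->
    pqf_closed exp (fun x => C1 x /\ forall y, C2 y -> D (join x y)).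
  move=> D clD; apply: closed_inter => //.
  have := @closed_biginter _ _ exp n {y | C2 y} (fun y x => D (join x (proj1_sig y))).
  move=> H.
  have H' : pqf_closed exp (fun x => forall y : {y | C2 y}, D (join x (proj1_sig y))).
    by apply: H => y; exact: slice_x.
  move: H'; congr (pqf_closed _ _); apply: functional_extensionality => x.
  apply: propositional_extensionality; split.
  - by move=> Hx y Cy; exact: (Hx (exist _ y Cy)).
  - by move=> Hx [y Cy]; exact: Hx.
have C1AB : forall x, C1 x <-> A1 x \/ B1 x.
  move=> x; split; last by case=> -[].
  move=> Cx.
  have := irr2 (fun y => A (join x y)) (fun y => B (join x y)) (slice_y _ _ clA)
     (slice_y _ _ clB).
  case.
  - by move=> y /AC /prodE [].
  - by move=> y /BC /prodE [].
  - by move=> y; rewrite -CAB prodE; tauto.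
  - by move=> H; left; split => // y /H.
  - by move=> H; right; split => // y /H.
have fin : forall D : ('I_(n + m) -> V) -> Prop,
    (forall z, D z -> prod_set C1 C2 z) ->
    (forall x, C1 x <-> C1 x /\ forall y, C2 y -> D (join x y)) ->
    forall z, D z <-> prod_set C1 C2 z.
  move=> D DC H z; split; first exact: DC.
  move=> [Cl Cr]; have [_ /(_ _ Cr)] := (H _).1 Cl.
  by rewrite join_lr.
case: (irr1 A1 B1 (clS _ clA) (clS _ clB)); try by move=> x [].
- exact: C1AB.
- by move=> H; left; apply: fin => // x; apply: iff_sym; exact: H.
- by move=> H; right; apply: fin => // x; apply: iff_sym; exact: H.
Qed.
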